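(* Let $a_1,\dots,a_n,b_1,\dots,b_m\in\Sigma_M$, and let $\tau$ be a shuffle (interleaving) of the action sequence $!?a_1\cdots !?a_n$ with the action sequence $!?b_1\cdots !?b_m$. Then for every peer $i\in\{1,\dots,N\}$ there is a shuffle $c_1\cdots c_{n+m}$ of the word $a_1\cdots a_n$ with the word $b_1\cdots b_m$ such that $\pi_i(\tau)=\pi_i(!?c_1\cdots !?c_{n+m})$.
   Context: A message set $M=(\Sigma_M,N,\mathrm{src},\mathrm{dst})$ consists of a finite set $\Sigma_M$ of messages, $N\ge1$ peers and maps $\mathrm{src},\mathrm{dst}:\Sigma_M\to\{1,\dots,N\}$ with $\mathrm{src}(a)\neq\mathrm{dst}(a)$. Actions are $!a$ (performed by peer $\mathrm{src}(a)$) and $?a$ (performed by peer $\mathrm{dst}(a)$); $!?a$ abbreviates $!a\cdot ?a$. For a finite sequence of actions $\tau$, $\pi_i(\tau)$ is the subsequence of actions of $\tau$ performed by peer $i$. *)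

(* Defs.v *)
From mathcomp Require Import all_boot.
Set Implicit Arguments. Unset Strict Implicit. Unset Printing Implicit Defensive.

Definition msgset (Msg : finType) (N : nat) (src dst : Msg -> nat) : Prop :=
  1 <= N /\
  forall a : Msg, [/\ 1 <= src a <= N, 1 <= dst a <= N & src a <> dst a].

Inductive action (Msg : Type) : Type :=
| Snd of Msg
| Rcv of Msg.

Definition actor (Msg : Type) (src dst : Msg -> nat) (x : action Msg) : nat :=
  match x with Snd a => src a | Rcv a => dst a end.

Definition proj (Msg : Type) (src dst : Msg -> nat) (i : nat) (tau : seq (action Msg))
  : seq (action Msg) :=
  filter (fun x => actor src dst x == i) tau.

Definition sndrcv (Msg : Type) (w : seq Msg) : seq (action Msg) :=
  flatten (map (fun a => [:: Snd a; Rcv a]) w).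

Inductive shuffle (T : Type) : seq T -> seq T -> seq T -> Prop :=
| shuffle_nil : shuffle [::] [::] [::]
| shuffle_l x u v w : shuffle u v w -> shuffle (x :: u) v (x :: w)
| shuffle_r x u v w : shuffle u v w -> shuffle u (x :: v) (x :: w).

(* Main.v *)
Require Import Defs.
From mathcomp Require Import all_boot.

Lemma shuffle_filter (T : Type) (p : pred T) u v w :
  shuffle u v w -> shuffle (filter p u) (filter p v) (filter p w).
Proof.
elim=> [|x u' v' w' _ IH|x u' v' w' _ IH] /=; first exact: shuffle_nil.
  by case: (p x) => //; apply: shuffle_l.
by case: (p x) => //; apply: shuffle_r.
Qed.

Lemma shuffle_nil_l (T : Type) (v w : seq T) : shuffle [::] v w -> w = v.
Proof.
elim: w v => [|x w IH] v H; inversion H; subst => //.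
by rewrite (IH _ H3).
Qed.

Lemma shuffle_nil_r (T : Type) (u w : seq T) : shuffle u [::] w -> w = u.
Proof.
elim: w u => [|x w IH] u H; inversion H; subst => //.
by rewrite (IH _ H3).
Qed.

Lemma shuffle_refl_l (T : Type) (u : seq T) : shuffle u [::] u.
Proof. elim: u => [|x u IH]; [exact: shuffle_nil | exact: shuffle_l]. Qed.

Lemma shuffle_refl_r (T : Type) (u : seq T) : shuffle [::] u u.
Proof. elim: u => [|x u IH]; [exact: shuffle_nil | exact: shuffle_r]. Qed.

Lemma shuffle_lift (T A : Type) (g : T -> option A) n :
  forall u v s, size u + size v <= n ->
  shuffle (pmap g u) (pmap g v) s -> exists c, shuffle u v c /\ pmap g c = s.
Proof.
elim: n => [|n IH] u v s.
  case: u => // ; case: v => // _ H; exists [::]; split; first exact: shuffle_nil.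
  by inversion H.
case: u => [|x u'].
  move=> _ /shuffle_nil_l ->; exists v; split => //; exact: shuffle_refl_r.
case: v => [|y v'].
  move=> _ /shuffle_nil_r ->; exists (x :: u'); split => //; exact: shuffle_refl_l.
move=> Hs.
case Hx: (g x) => [a|]; last first.
  move=> H; rewrite /= Hx in H.
  have [c [Hc Hp]] := IH u' (y :: v') s ltac:(by move: Hs; rewrite addSn ltnS) H.
  by exists (x :: c); split; [apply: shuffle_l | rewrite /= Hx].
case Hy: (g y) => [b|]; last first.
  move=> H; rewrite /= Hx Hy in H.
  have [c [Hc Hp]] := IH (x :: u') v' s ltac:(by move: Hs; rewrite addnS ltnS) ltac:(by rewrite /= Hx; exact: H).
  by exists (y :: c); split; [apply: shuffle_r | rewrite /= Hy].
move=> H; rewrite /= Hx Hy in H; inversion H; subst.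
  have [c [Hc Hp]] := IH u' (y :: v') w ltac:(by move: Hs; rewrite addSn ltnS) ltac:(by rewrite /= Hy).
  by exists (x :: c); split; [apply: shuffle_l | rewrite /= Hx Hp].
have [c [Hc Hp]] := IH (x :: u') v' w ltac:(by move: Hs; rewrite addnS ltnS) ltac:(by rewrite /= Hx).
by exists (y :: c); split; [apply: shuffle_r | rewrite /= Hy Hp].
Qed.

Theorem lemma4p8 (Msg : finType) (N : nat) (src dst : Msg -> nat)
  (HM : msgset N src dst) (u v : seq Msg) (tau : seq (action Msg))
  (Htau : shuffle (sndrcv u) (sndrcv v) tau) :
  forall i : nat, 1 <= i <= N ->
  exists c : seq Msg, shuffle u v c /\
    proj src dst i tau = proj src dst i (sndrcv c).
Proof.
move=> i _.
pose g := fun a : Msg => if src a == i then Some (Snd a)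
                         else if dst a == i then Some (Rcv a) else None.
have Pg : forall w, proj src dst i (sndrcv w) = pmap g w.
  elim=> [|a w IHw] //=.
  rewrite /proj /sndrcv /= -/(sndrcv w) -[filter _ (sndrcv w)]/(proj src dst i (sndrcv w)) IHw.
  rewrite /g /=.
  case: HM => _ /(_ a) [_ _ Hne].
  case: eqP => [Hs|_]; case: eqP => [Hd|_] //.
  by exfalso; apply: Hne; rewrite Hs Hd.
have H := @shuffle_filter _ (fun x => actor src dst x == i) _ _ _ Htau.
rewrite -/(proj src dst i _) -/(proj src dst i (sndrcv v)) -/(proj src dst i tau) !Pg in H.
have [c [Hc Hp]] := @shuffle_lift _ _ g _ _ _ _ (leqnn _) H.
by exists c; split => //; rewrite Pg Hp.
Qed.
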